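(* Let $\delta\in[1/3,1]$, $\alpha>0$ with $\alpha\delta<1$, $\eta_0^{2}=\frac{1+\alpha^{2}}{1+\delta^{2}}$, $0\le B_0\le\sqrt{1-\eta_0^2\delta^2}$, and $\widetilde{A_\ast}=\sqrt{1-(1+\delta^2)B_0^2}$. Define $\lambda_r,\lambda_i\ge0$ by $$2\lambda_r^{2}=\sqrt2\,\widetilde{A_\ast}+\varepsilon^{2}B_0^{2}(1+\delta^{2})^{2},\qquad 2\lambda_i^{2}=\sqrt2\,\widetilde{A_\ast}-\varepsilon^{2}B_0^{2}(1+\delta^{2})^{2}.$$ If $\alpha\ge\frac{10}{3}\varepsilon^2$ and $\varepsilon>0$ is small enough, then $$\lambda_r\lambda_i\ge\frac{\widetilde{A_\ast}}{2},\qquad \frac{\widetilde{A_\ast}^{1/2}}{2^{1/4}}\le\lambda_r\le2^{1/4}\widetilde{A_\ast}^{1/2},\qquad \frac{\widetilde{A_\ast}^{1/2}}{2^{5/4}}\le\lambda_i\le\frac{\widetilde{A_\ast}^{1/2}}{2^{1/4}},$$ while $\widetilde{A_\ast}$ varies from $1$ to $\alpha\delta$ as $B_0$ varies from $0$ to $\sqrt{1-\eta_0^2\delta^2}$.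
   Context: The numbers $\lambda_r\pm i\lambda_i$, $-\lambda_r\pm i\lambda_i$ are the nonzero roots of $\lambda^4-2\varepsilon^2B_0^2(1+\delta^2)^2\lambda^2+2\widetilde{A_\ast}^2=0$. *)

(* Defs.v *)
From mathcomp Require Import all_boot all_order all_algebra.
From mathcomp Require Import reals.
Set Implicit Arguments. Unset Strict Implicit. Unset Printing Implicit Defensive.
Import Order.TTheory GRing.Theory Num.Theory.
Local Open Scope ring_scope.

Definition eta0sq {R : realType} (alpha delta : R) : R :=
  (1 + alpha ^+ 2) / (1 + delta ^+ 2).

Definition B0max {R : realType} (alpha delta : R) : R :=
  Num.sqrt (1 - eta0sq alpha delta * delta ^+ 2).

Definition Atilde {R : realType} (delta B0 : R) : R :=
  Num.sqrt (1 - (1 + delta ^+ 2) * B0 ^+ 2).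

(* Main.v *)
Require Import Defs.
From mathcomp Require Import all_boot all_order all_algebra.
From mathcomp Require Import reals.
From mathcomp Require Import ring lra.
Import Order.TTheory GRing.Theory Num.Theory.
Local Open Scope ring_scope.

Lemma sq_le (R : realType) (x y : R) : 0 <= x -> 0 <= y -> x ^+ 2 <= y ^+ 2 -> x <= y.
Proof. move=> hx hy h; rewrite -(ler_pXn2r (n:=2)) //; by rewrite nnegrE. Qed.

Lemma B0max_sq (R : realType) (alpha delta : R) : 0 <= delta -> 0 < alpha -> alpha * delta < 1 ->
  B0max alpha delta ^+ 2 = (1 - (alpha * delta) ^+ 2) / (1 + delta ^+ 2).
Proof.
move=> hd ha had.
have hd2 : 0 < 1 + delta ^+ 2 by rewrite ltr_pwDl // sqr_ge0.
rewrite /B0max.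
have -> : 1 - eta0sq alpha delta * delta ^+ 2 = (1 - (alpha * delta) ^+ 2) / (1 + delta ^+ 2).
  rewrite /eta0sq; field; exact: lt0r_neq0.
have had0 : 0 <= alpha * delta by apply: mulr_ge0 => //; apply: ltW.
rewrite sqr_sqrtr //; apply: divr_ge0; last exact: ltW.
rewrite subr_ge0 expr2; nra.
Qed.

Theorem lemma3 (R : realType) :
  exists eps0 : R, 0 < eps0 /\
  forall (eps delta alpha B0 lr li : R),
    0 < eps -> eps < eps0 ->
    3^-1 <= delta -> delta <= 1 ->
    0 < alpha -> alpha * delta < 1 ->
    0 <= B0 -> B0 <= B0max alpha delta ->
    alpha >= 10 / 3 * eps ^+ 2 ->
    0 <= lr -> 0 <= li ->
    2 * lr ^+ 2 = Num.sqrt 2 * Atilde delta B0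
                  + eps ^+ 2 * B0 ^+ 2 * (1 + delta ^+ 2) ^+ 2 ->
    2 * li ^+ 2 = Num.sqrt 2 * Atilde delta B0
                  - eps ^+ 2 * B0 ^+ 2 * (1 + delta ^+ 2) ^+ 2 ->
    (lr * li >= Atilde delta B0 / 2
     /\ Num.sqrt (Atilde delta B0) / Num.sqrt (Num.sqrt 2) <= lr
     /\ lr <= Num.sqrt (Num.sqrt 2) * Num.sqrt (Atilde delta B0)
     /\ Num.sqrt (Atilde delta B0) / (2 * Num.sqrt (Num.sqrt 2)) <= li
     /\ li <= Num.sqrt (Atilde delta B0) / Num.sqrt (Num.sqrt 2)
     /\ Atilde delta 0 = 1
     /\ Atilde delta (B0max alpha delta) = alpha * delta /\
        forall B1 B2 : R, 0 <= B1 -> B1 < B2 -> B2 <= B0max alpha delta ->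
          Atilde delta B2 < Atilde delta B1).
Proof.
exists 1; split; first lra.
move=> eps delta alpha B0 lr li he _ hd1 hd2 ha had hB0 hB0m hae hlr hli Elr Eli.
have hd0 : 0 <= delta by lra.
have hD : 0 < 1 + delta ^+ 2 by nra.
have hBm0 : 0 <= B0max alpha delta by rewrite /B0max sqrtr_ge0.
have hBm2 := @B0max_sq R alpha delta hd0 ha had.
have hu : forall B, 0 <= B -> B <= B0max alpha delta ->
    (1 + delta ^+ 2) * B ^+ 2 <= 1 - (alpha * delta) ^+ 2.
  move=> B hB hBB.
  have : B ^+ 2 <= B0max alpha delta ^+ 2 by nra.
  rewrite hBm2 ler_pdivlMr //; lra.
have hA : forall B, 0 <= B -> B <= B0max alpha delta ->
    Atilde delta B ^+ 2 = 1 - (1 + delta ^+ 2) * B ^+ 2.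
  move=> B hB hBB; rewrite /Atilde sqr_sqrtr //.
  have := hu B hB hBB; nra.
set A := Atilde delta B0.
have hA0 : 0 <= A by rewrite /A /Atilde sqrtr_ge0.
have hA2 := hA B0 hB0 hB0m.
have huB := hu B0 hB0 hB0m.
have hAad : alpha * delta <= A.
  apply: sq_le => //; first nra.
  rewrite hA2; lra.
set E := eps ^+ 2 * B0 ^+ 2 * (1 + delta ^+ 2) ^+ 2.
have hE0 : 0 <= E by rewrite /E; nra.
have hEA : E <= A.
  have h1 : (1 + delta ^+ 2) * B0 ^+ 2 <= 1 by nra.
  have h2 : E <= eps ^+ 2 * (1 + delta ^+ 2).
    rewrite /E.
    have : 0 <= eps ^+ 2 * (1 + delta ^+ 2) by nra.
    nra.
  have h3 : 1 + delta ^+ 2 <= 10 / 3 * delta by nra.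
  nra.
set s := Num.sqrt (2 : R).
have hs2 : s ^+ 2 = 2 by rewrite /s sqr_sqrtr.
have hs0 : 0 < s by rewrite /s sqrtr_gt0.
have hs1 : 1 <= s by apply: sq_le; lra.
set q := Num.sqrt s.
have hq2 : q ^+ 2 = s by rewrite /q sqr_sqrtr // ltW.
have hq0 : 0 < q by rewrite /q sqrtr_gt0.
set a := Num.sqrt A.
have ha2 : a ^+ 2 = A by rewrite /a sqr_sqrtr.
have ha0 : 0 <= a by rewrite /a sqrtr_ge0.
have hlrli : 0 <= lr * li by apply: mulr_ge0.
have hs15 : s <= 3 / 2 by apply: sq_le; [lra|lra|rewrite hs2; lra].
have hL : lr ^+ 2 * s * 2 = 2 * A + s * E.
  have -> : lr ^+ 2 * s * 2 = s * (2 * lr ^+ 2) by ring.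
  by rewrite Elr mulrDr mulrA -expr2 hs2.
have hI : li ^+ 2 * s * 2 = 2 * A - s * E.
  have -> : li ^+ 2 * s * 2 = s * (2 * li ^+ 2) by ring.
  by rewrite Eli mulrBr mulrA -expr2 hs2.
have hsE0 : 0 <= s * E by apply: mulr_ge0 => //; apply: ltW.
have hsEA : s * E <= 3 / 2 * A.
  apply: (le_trans (y := s * A)); first by rewrite ler_pM2l.
  by apply: ler_wpM2r.
split.
  apply: sq_le; [by apply: divr_ge0 | exact: hlrli |].
  have -> : (lr * li) ^+ 2 = (s * A + E) * (s * A - E) / 4.
    by rewrite -Elr -Eli; field.
  have -> : (s * A + E) * (s * A - E) = 2 * A ^+ 2 - E ^+ 2.
    by rewrite -hs2; ring.
  nra.
split.
  apply: sq_le; [by apply: divr_ge0 => //; apply: ltW | exact: hlr |].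
  rewrite expr_div_n ha2 hq2 ler_pdivrMr //.
  lra.
split.
  apply: sq_le; [exact: hlr | by apply: mulr_ge0 => //; apply: ltW |].
  rewrite exprMn ha2 hq2.
  rewrite -(ler_pM2r hs0) [s * A * s]mulrAC -expr2 hs2; lra.
split.
  apply: sq_le; [by apply: divr_ge0 => //; nra | exact: hli |].
  rewrite expr_div_n ha2 exprMn hq2 ler_pdivrMr; last nra.
  lra.
split.
  apply: sq_le; [exact: hli | by apply: divr_ge0 => //; apply: ltW |].
  rewrite expr_div_n ha2 hq2 ler_pdivlMr //.
  lra.
split.
  by rewrite /Atilde expr0n /= mulr0 subr0 sqrtr1.
have hc : (1 + delta ^+ 2) * ((1 - (alpha * delta) ^+ 2) / (1 + delta ^+ 2)) = 1 - (alpha * delta) ^+ 2.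
  by field; exact: lt0r_neq0.
split.
  apply/eqP; rewrite eq_le; apply/andP; split; last first.
    apply: sq_le; [nra|by rewrite /Atilde sqrtr_ge0|].
    rewrite hA // hBm2 hc; lra.
  apply: sq_le; [by rewrite /Atilde sqrtr_ge0|nra|].
  rewrite hA // hBm2 hc; lra.
move=> B1 B2 hB1 hB12 hB2.
have hB1m : B1 <= B0max alpha delta by lra.
have hsq : B1 ^+ 2 < B2 ^+ 2 by rewrite !expr2; nra.
rewrite /Atilde ltr_sqrt.
  by rewrite ltrD2l ltrN2 ltr_pM2l.
have h' := hu B2 ltac:(lra) hB2.
have had0 : 0 < alpha * delta by apply: mulr_gt0 => //; lra.
have : 0 < (alpha * delta) ^+ 2 by apply: exprn_gt0.
have : (1 + delta ^+ 2) * B1 ^+ 2 <= (1 + delta ^+ 2) * B2 ^+ 2.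
  by rewrite ler_pM2l // ltW.
lra.
Qed.
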